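(* For every $\alpha\in c_0(\mathbb{Z}_{\ge0})$ there exists a unique derivation $d_\alpha:\mathcal{A}\to A$ such that $d_\alpha(U)=U\alpha(\mathbb{K})$, $d_\alpha(U^* )=-\alpha(\mathbb{K})U^*$, and $d_\alpha(a)=0$ for every $a\in\mathcal{A}_0$. Moreover $d_\alpha$ is approximately inner and invariant.
   Context: Setup: $G$ is an infinite compact (Hausdorff) abelian group, written additively, and $x_1\in G$ generates a dense cyclic subgroup; $x_n=nx_1$. $\widehat G$ is the group of continuous characters and $\mathcal F$ their linear span. Let $H_+=\ell^2(\mathbb{Z}_{\ge 0})$ with canonical basis $\{E_k^+\}$; $UE_k^+=E_{k+1}^+$, $M^+_fE^+_k=f(x_k)E^+_k$, $\mathbb{K}E_k^+=kE_k^+$, and for a bounded sequence $\alpha$, $\alpha(\mathbb{K})E_k^+=\alpha(k)E_k^+$. $A=C^*(U,M^+_f:f\in C(G))$, $\mathcal{A}$ is the $*$-subalgebra generated by $U,U^*,M^+_\chi$ ($\chi\in\widehat G$), and $\mathcal{A}_0=\{a(\mathbb{K})+M^+_f: a\in c_{00}(\mathbb{Z}_{\ge0}), f\in\mathcal F\}$ is the set of diagonal elements of $\mathcal A$ ($c_{00}$ = eventually zero sequences). For $\theta\in\mathbb{R}$ let $\rho_\theta(a)=e^{i\theta\mathbb{K}}ae^{-i\theta\mathbb{K}}$. A derivation $d$ (linear, Leibniz) is invariant if $\rho_\theta^{-1}(d(\rho_\theta(a)))=d(a)$ for all $\theta,a$, and approximately inner if $d(a)=\lim_j[x_j,a]$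 in norm for some $x_j\in A$ and all $a\in\mathcal{A}$. *)

(* Defs.v *)
(* All operator-algebra notions are built
   concretely here: complex numbers as pairs of reals, bounded operators on
   H_+ = l^2(Z_{>=0}) via their matrices w.r.t. the canonical basis E_k^+,
   and compact abelian groups as an explicit structure. *)
From Stdlib Require Import Reals ClassicalEpsilon ZArith List.
Open Scope R_scope.

Definition Cplx := (R * R)%type.
Definition C0 : Cplx := (0, 0).
Definition C1 : Cplx := (1, 0).
Definition RtoC (r : R) : Cplx := (r, 0).
Definition Cplus (a b : Cplx) : Cplx := (fst a + fst b, snd a + snd b).
Definition Copp (a : Cplx) : Cplx := (- fst a, - snd a).
Definition Cminus (a b : Cplx) : Cplx := Cplus a (Copp b).
Definition Cmult (a b : Cplx) : Cplx :=
  (fst a * fst b - snd a * snd b, fst a * snd b + snd a * fst b).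
Definition Cconj (a : Cplx) : Cplx := (fst a, - snd a).
Definition Cnorm2 (a : Cplx) : R := fst a * fst a + snd a * snd a.
Definition Cabs (a : Cplx) : R := sqrt (Cnorm2 a).
Definition Cexpi (t : R) : Cplx := (cos t, sin t).

Fixpoint Cfsum (f : nat -> Cplx) (n : nat) : Cplx :=
  match n with
  | O => f O
  | S m => Cplus (Cfsum f m) (f (S m))
  end.

(* sum of a convergent real series (unspecified if divergent) *)
Definition Rseries (u : nat -> R) : R :=
  epsilon (inhabits 0) (fun l => infinite_sum u l).
Definition Cseries (s : nat -> Cplx) : Cplx :=
  (Rseries (fun n => fst (s n)), Rseries (fun n => snd (s n))).

(* T i j = < E_i^+ , T E_j^+ > *)
Definition Mat := nat -> nat -> Cplx.

Definition mzero : Mat := fun _ _ => C0.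
Definition madd (S T : Mat) : Mat := fun i j => Cplus (S i j) (T i j).
Definition mopp (T : Mat) : Mat := fun i j => Copp (T i j).
Definition msub (S T : Mat) : Mat := madd S (mopp T).
Definition mscal (c : Cplx) (T : Mat) : Mat := fun i j => Cmult c (T i j).
(* operator product (the series converge absolutely for bounded operators) *)
Definition mmul (S T : Mat) : Mat :=
  fun i k => Cseries (fun j => Cmult (S i j) (T j k)).
Definition madj (T : Mat) : Mat := fun i j => Cconj (T j i).
Definition mcomm (x a : Mat) : Mat := msub (mmul x a) (mmul a x).

(* ||T|| <= e  (tested on the finite sections, which characterises the
   operator norm of a matrix) *)
Definition normle (T : Mat) (e : R) : Prop :=
  0 <= e /\
  forall (n : nat) (v : nat -> Cplx),
    sum_f_R0 (fun i => Cnorm2 (Cfsum (fun j => Cmult (T i j) (v j)) n)) n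
    <= e * e * sum_f_R0 (fun j => Cnorm2 (v j)) n.

Definition bounded (T : Mat) : Prop := exists e, normle T e.

Definition mconv (T : nat -> Mat) (L : Mat) : Prop :=
  forall eps, 0 < eps -> exists N, forall n, (N <= n)%nat -> normle (msub (T n) L) eps.

(* diagonal operator  a(K) E_k = a(k) E_k *)
Definition diag (a : nat -> Cplx) : Mat :=
  fun i j => if Nat.eqb i j then a i else C0.
Definition Ushift : Mat := fun i j => if Nat.eqb i (S j) then C1 else C0.

Inductive star_alg (Gen : Mat -> Prop) : Mat -> Prop :=
  | sa_gen : forall T, Gen T -> star_alg Gen T
  | sa_add : forall S T, star_alg Gen S -> star_alg Gen T -> star_alg Gen (madd S T)
  | sa_scal : forall c T, star_alg Gen T -> star_alg Gen (mscal c T)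
  | sa_mul : forall S T, star_alg Gen S -> star_alg Gen T -> star_alg Gen (mmul S T)
  | sa_adj : forall T, star_alg Gen T -> star_alg Gen (madj T).

Definition cstar_alg (Gen : Mat -> Prop) (T : Mat) : Prop :=
  bounded T /\
  forall eps, 0 < eps -> exists a, star_alg Gen a /\ normle (msub T a) eps.

Definition c0seq (a : nat -> Cplx) : Prop :=
  forall eps, 0 < eps -> exists N, forall k, (N <= k)%nat -> Cabs (a k) < eps.
Definition c00seq (a : nat -> Cplx) : Prop :=
  exists N, forall k, (N <= k)%nat -> a k = C0.

Record TopAbGroup := {
  carrier :> Type;
  gadd : carrier -> carrier -> carrier;
  gopp : carrier -> carrier;
  gzero : carrier;
  gaddA : forall x y z, gadd x (gadd y z) = gadd (gadd x y) z;
  gaddC : forall x y, gadd x y = gadd y x;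
  gadd0 : forall x, gadd x gzero = x;
  gaddN : forall x, gadd x (gopp x) = gzero;
  gopen : (carrier -> Prop) -> Prop;
  open_full : gopen (fun _ => True);
  open_empty : gopen (fun _ => False);
  open_inter : forall U V, gopen U -> gopen V -> gopen (fun x => U x /\ V x);
  open_union : forall F : (carrier -> Prop) -> Prop,
      (forall U, F U -> gopen U) -> gopen (fun x => exists U, F U /\ U x);
  gadd_cont : forall x y W, gopen W -> W (gadd x y) ->
      exists U V, gopen U /\ gopen V /\ U x /\ V y /\
        forall u v, U u -> V v -> W (gadd u v);
  gopp_cont : forall W, gopen W -> gopen (fun x => W (gopp x))
}.

Arguments gadd {_}. Arguments gopp {_}. Arguments gzero {_}. Arguments gopen {_}.

Definition compact_group (G : TopAbGroup) : Prop :=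
  forall F : (G -> Prop) -> Prop,
    (forall U, F U -> gopen U) ->
    (forall x, exists U, F U /\ U x) ->
    exists l : list (G -> Prop), (forall U, In U l -> F U) /\
      (forall x, exists U, In U l /\ U x).

Definition hausdorff (G : TopAbGroup) : Prop :=
  forall x y : G, x <> y -> exists U V, gopen U /\ gopen V /\ U x /\ V y /\
    forall z, U z -> V z -> False.

Definition infinite_group (G : TopAbGroup) : Prop :=
  ~ exists l : list G, forall g, In g l.

Fixpoint natmul {G : TopAbGroup} (n : nat) (x : G) : G :=
  match n with O => gzero | S m => gadd (natmul m x) x end.
Definition zmul {G : TopAbGroup} (n : Z) (x : G) : G :=
  match n with
  | Z0 => gzero
  | Zpos p => natmul (Pos.to_nat p) x
  | Zneg p => gopp (natmul (Pos.to_nat p) x)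
  end.

Definition dense_cyclic {G : TopAbGroup} (x1 : G) : Prop :=
  forall U, gopen U -> (exists g, U g) -> exists n : Z, U (zmul n x1).

Definition continuous {G : TopAbGroup} (f : G -> Cplx) : Prop :=
  forall x eps, 0 < eps -> exists U, gopen U /\ U x /\
    forall y, U y -> Cabs (Cminus (f y) (f x)) < eps.

Definition character {G : TopAbGroup} (chi : G -> Cplx) : Prop :=
  continuous chi /\ (forall x, Cabs (chi x) = 1) /\
  (forall x y, chi (gadd x y) = Cmult (chi x) (chi y)).

Inductive char_span {G : TopAbGroup} : (G -> Cplx) -> Prop :=
  | cs_zero : char_span (fun _ => C0)
  | cs_char : forall chi, character chi -> char_span chi
  | cs_add : forall f g, char_span f -> char_span g ->
      char_span (fun x => Cplus (f x) (g x))
  | cs_scal : forall c f, char_span f -> char_span (fun x => Cmult c (f x)).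

Definition Mf {G : TopAbGroup} (x1 : G) (f : G -> Cplx) : Mat :=
  diag (fun k => f (natmul k x1)).

Definition Abig {G : TopAbGroup} (x1 : G) : Mat -> Prop :=
  cstar_alg (fun T => T = Ushift \/ exists f : G -> Cplx, continuous f /\ T = Mf x1 f).
Definition Acal {G : TopAbGroup} (x1 : G) : Mat -> Prop :=
  star_alg (fun T => T = Ushift \/ T = madj Ushift \/
                     exists chi : G -> Cplx, character chi /\ T = Mf x1 chi).
Definition A0 {G : TopAbGroup} (x1 : G) : Mat -> Prop :=
  fun T => exists (a : nat -> Cplx) (f : G -> Cplx),
    c00seq a /\ char_span f /\ T = madd (diag a) (Mf x1 f).

Definition is_derivation (dom cod : Mat -> Prop) (d : Mat -> Mat) : Prop :=
  (forall a, dom a -> cod (d a)) /\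
  (forall a b, dom a -> dom b -> d (madd a b) = madd (d a) (d b)) /\
  (forall c a, dom a -> d (mscal c a) = mscal c (d a)) /\
  (forall a b, dom a -> dom b -> d (mmul a b) = madd (mmul (d a) b) (mmul a (d b))).

Definition rho (theta : R) (a : Mat) : Mat :=
  mmul (mmul (diag (fun k => Cexpi (theta * INR k))) a)
       (diag (fun k => Cexpi (- (theta * INR k)))).

(* invariant: rho_theta^{-1}(d(rho_theta a)) = d a, with rho_theta^{-1} = rho_{-theta} *)
Definition invariant (dom : Mat -> Prop) (d : Mat -> Mat) : Prop :=
  forall theta a, dom a -> rho (- theta) (d (rho theta a)) = d a.

Definition approx_inner (dom Aalg : Mat -> Prop) (d : Mat -> Mat) : Prop :=
  exists x : nat -> Mat, (forall j, Aalg (x j)) /\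
    forall a, dom a -> mconv (fun j => mcomm (x j) a) (d a).

Definition dalpha_conds {G : TopAbGroup} (x1 : G) (alpha : nat -> Cplx) (d : Mat -> Mat) : Prop :=
  d Ushift = mmul Ushift (diag alpha) /\
  d (madj Ushift) = mopp (mmul (diag alpha) (madj Ushift)) /\
  (forall a, A0 x1 a -> d a = mzero).

(* Main.v *)
Require Import Defs.
From Stdlib Require Import Reals Lra Lia ClassicalEpsilon FunctionalExtensionality.
From Coquelicot Require Coquelicot.
Open Scope R_scope.

Ltac cring := apply injective_projections; simpl; ring.
Ltac cunf := unfold Cplus, Cmult, Copp, Cminus, Cconj, C0, Defs.C1, RtoC, Cexpi in *.

Lemma Cabs_Cmod z : Cabs z = Coquelicot.Complex.Cmod z.
Proof. unfold Cabs, Cnorm2, Coquelicot.Complex.Cmod. f_equal. simpl; ring. Qed.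
Lemma Cabs_ge0 z : 0 <= Cabs z.
Proof. unfold Cabs; apply sqrt_pos. Qed.
Lemma Cabs_tri a b : Cabs (Cplus a b) <= Cabs a + Cabs b.
Proof. rewrite !Cabs_Cmod. exact (Coquelicot.Complex.Cmod_triangle a b). Qed.
Lemma Cabs_mult a b : Cabs (Cmult a b) = Cabs a * Cabs b.
Proof. rewrite !Cabs_Cmod. exact (Coquelicot.Complex.Cmod_mult a b). Qed.
Lemma Cabs_opp a : Cabs (Copp a) = Cabs a.
Proof. unfold Cabs, Cnorm2, Copp; simpl. f_equal; ring. Qed.
Lemma Cabs_conj a : Cabs (Cconj a) = Cabs a.
Proof. unfold Cabs, Cnorm2, Cconj; simpl. f_equal; ring. Qed.
Lemma Cabs_C0 : Cabs C0 = 0.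
Proof. unfold Cabs, Cnorm2, C0; simpl. replace (0*0+0*0) with 0 by ring. apply sqrt_0. Qed.
Lemma Cabs_C1 : Cabs Defs.C1 = 1.
Proof. unfold Cabs, Cnorm2, Defs.C1; simpl. replace (1*1+0*0) with 1 by ring. apply sqrt_1. Qed.
Lemma Cabs_minus_sym a b : Cabs (Cminus a b) = Cabs (Cminus b a).
Proof. unfold Cabs, Cnorm2, Cminus, Cplus, Copp; simpl. f_equal; ring. Qed.
Lemma Cnorm2_Cabs z : Cnorm2 z = Cabs z * Cabs z.
Proof. unfold Cabs. rewrite sqrt_sqrt; [auto| unfold Cnorm2; nra]. Qed.
Lemma Cabs_tri3 a b : Cabs (Cminus a b) <= Cabs a + Cabs b.
Proof. unfold Cminus. rewrite <- (Cabs_opp b). apply Cabs_tri. Qed.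

Lemma Cfsum_ext f g n : (forall j, (j <= n)%nat -> f j = g j) -> Cfsum f n = Cfsum g n.
Proof. induction n; simpl; intros H. apply H; lia. rewrite IHn by (intros; apply H; lia). rewrite H by lia; auto. Qed.
Lemma Cfsum_plus f g n : Cfsum (fun j => Cplus (f j) (g j)) n = Cplus (Cfsum f n) (Cfsum g n).
Proof. induction n; simpl; auto. rewrite IHn. cring. Qed.
Lemma Cfsum_scal c f n : Cfsum (fun j => Cmult c (f j)) n = Cmult c (Cfsum f n).
Proof. induction n; simpl; auto. rewrite IHn. cring. Qed.
Lemma Cfsum_opp f n : Cfsum (fun j => Copp (f j)) n = Copp (Cfsum f n).
Proof. induction n; simpl; auto. rewrite IHn. cring. Qed.
Lemma Cfsum_conj f n : Cfsum (fun j => Cconj (f j)) n = Cconj (Cfsum f n).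
Proof. induction n; simpl; auto. rewrite IHn. cring. Qed.
Lemma Cfsum_fst f n : fst (Cfsum f n) = sum_f_R0 (fun j => fst (f j)) n.
Proof. induction n; simpl; auto. rewrite IHn; auto. Qed.
Lemma Cfsum_snd f n : snd (Cfsum f n) = sum_f_R0 (fun j => snd (f j)) n.
Proof. induction n; simpl; auto. rewrite IHn; auto. Qed.
Lemma Cfsum_abs f n : Cabs (Cfsum f n) <= sum_f_R0 (fun j => Cabs (f j)) n.
Proof. induction n; simpl. lra. eapply Rle_trans. apply Cabs_tri. lra. Qed.
Lemma Cfsum_zero f n : (forall j, (j <= n)%nat -> f j = C0) -> Cfsum f n = C0.
Proof. intros H; induction n; simpl. apply H; lia. rewrite IHn. rewrite (H (S n)) by lia. cring. intros; apply H; lia. Qed.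
Lemma Cfsum_single f j0 n : (forall j, j <> j0 -> f j = C0) -> (j0 <= n)%nat -> Cfsum f n = f j0.
Proof.
  intros H. induction n; intros Hn; simpl.
  - replace j0 with 0%nat by lia; auto.
  - destruct (Nat.eq_dec j0 (S n)) as [e|e].
    + subst. rewrite Cfsum_zero. cring. intros j Hj; apply H; lia.
    + rewrite IHn by lia. rewrite (H (S n)) by lia. cring.
Qed.

Lemma Rseries_finite u M : (forall j, (M < j)%nat -> u j = 0) -> Rseries u = sum_f_R0 u M.
Proof.
  intros H.
  assert (Hs : infinite_sum u (sum_f_R0 u M)).
  { intros eps He. exists M. intros n Hn. unfold Rdist.
    assert (E : forall k, sum_f_R0 u (M + k) = sum_f_R0 u M).
    { induction k. rewrite Nat.add_0_r; auto. replace (M + S k)%nat with (S (M + k)) by lia.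
      simpl. rewrite IHk, H by lia. ring. }
    replace n with (M + (n - M))%nat by lia. rewrite E, Rminus_diag, Rabs_R0; auto. }
  unfold Rseries. apply (uniqueness_sum u). 2: exact Hs.
  apply epsilon_spec. eauto.
Qed.
Lemma Cseries_finite f M : (forall j, (M < j)%nat -> f j = C0) -> Cseries f = Cfsum f M.
Proof.
  intros H. unfold Cseries. rewrite (Rseries_finite _ M), (Rseries_finite _ M).
  apply injective_projections; simpl. symmetry; apply Cfsum_fst. symmetry; apply Cfsum_snd.
  intros j Hj; rewrite H; auto. intros j Hj; rewrite H; auto.
Qed.
Lemma Cseries_single f j0 : (forall j, j <> j0 -> f j = C0) -> Cseries f = f j0.
Proof. intros H. rewrite (Cseries_finite f j0). apply Cfsum_single; auto. intros; apply H; lia. Qed.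
Lemma Cseries_zero f : (forall j, f j = C0) -> Cseries f = C0.
Proof. intros H. rewrite (Cseries_single f 0); auto. Qed.

Lemma Cmult_0_l z : Cmult C0 z = C0. Proof. cring. Qed.
Lemma Cmult_0_r z : Cmult z C0 = C0. Proof. cring. Qed.

Definition bandz (N : nat) (T : Mat) := forall i j, (j + N < i \/ i + N < j)%nat -> T i j = C0.
Definition ebound (M : R) (T : Mat) := forall i j, Cabs (T i j) <= M.

Lemma mmul_diag_l g T : mmul (diag g) T = fun i k => Cmult (g i) (T i k).
Proof.
  apply functional_extensionality; intro i; apply functional_extensionality; intro k.
  unfold mmul, diag. rewrite (Cseries_single _ i). rewrite Nat.eqb_refl; auto.
  intros j Hj. destruct (Nat.eqb_spec i j). lia. apply Cmult_0_l.
Qed.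
Lemma mmul_diag_r T g : mmul T (diag g) = fun i k => Cmult (T i k) (g k).
Proof.
  apply functional_extensionality; intro i; apply functional_extensionality; intro k.
  unfold mmul, diag. rewrite (Cseries_single _ k). rewrite Nat.eqb_refl; auto.
  intros j Hj. destruct (Nat.eqb_spec j k). lia. apply Cmult_0_r.
Qed.
Lemma mmul_U_l T : mmul Ushift T = fun i k => match i with O => C0 | S i' => T i' k end.
Proof.
  apply functional_extensionality; intro i; apply functional_extensionality; intro k.
  unfold mmul, Ushift. destruct i as [|i'].
  - apply Cseries_zero. intros j. simpl. apply Cmult_0_l.
  - rewrite (Cseries_single _ i'). rewrite Nat.eqb_refl. cring.
    intros j Hj. destruct (Nat.eqb_spec (S i') (S j)). lia. apply Cmult_0_l.
Qed.
Lemma mmul_Uadj_r T : mmul T (madj Ushift) = fun i k => match k with O => C0 | S k' => T i k' end.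
Proof.
  apply functional_extensionality; intro i; apply functional_extensionality; intro k.
  unfold mmul, madj, Ushift. destruct k as [|k'].
  - apply Cseries_zero. intros j. simpl. cring.
  - rewrite (Cseries_single _ k'). rewrite Nat.eqb_refl. cring.
    intros j Hj. destruct (Nat.eqb_spec (S k') (S j)). lia. cring.
Qed.
Lemma mmul_U_r T : mmul T Ushift = fun i k => T i (S k).
Proof.
  apply functional_extensionality; intro i; apply functional_extensionality; intro k.
  unfold mmul, Ushift. rewrite (Cseries_single _ (S k)). rewrite Nat.eqb_refl. cring.
  intros j Hj. destruct (Nat.eqb_spec j (S k)). lia. cring.
Qed.
Lemma mmul_Uadj_l T : mmul (madj Ushift) T = fun i k => T (S i) k.
Proof.
  apply functional_extensionality; intro i; apply functional_extensionality; intro k.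
  unfold mmul, madj, Ushift. rewrite (Cseries_single _ (S i)). rewrite Nat.eqb_refl. cring.
  intros j Hj. destruct (Nat.eqb_spec j (S i)). lia. cring.
Qed.

Lemma UQU g : mmul Ushift (mmul (diag g) (madj Ushift)) =
  diag (fun k => match k with O => C0 | S k' => g k' end).
Proof.
  rewrite mmul_Uadj_r, mmul_U_l.
  apply functional_extensionality; intro i; apply functional_extensionality; intro k.
  unfold diag. destruct i, k; simpl; auto.
Qed.

Lemma mmul_fin S T N i k : bandz N S ->
  mmul S T i k = Cfsum (fun j => Cmult (S i j) (T j k)) (i + N).
Proof.
  intros HS. unfold mmul. apply Cseries_finite. intros j Hj. rewrite HS by lia. apply Cmult_0_l.
Qed.

Lemma wcs (w x : nat -> R) n : (forall j, 0 <= w j) ->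
  (sum_f_R0 (fun j => w j * x j) n)^2 <=
  sum_f_R0 w n * sum_f_R0 (fun j => w j * x j * x j) n.
Proof.
  intros Hw. induction n; simpl. nra.
  set (A := sum_f_R0 w n) in *. set (B := sum_f_R0 (fun j => w j * x j) n) in *.
  set (C := sum_f_R0 (fun j => w j * x j * x j) n) in *.
  simpl in IHn. assert (HA : 0 <= A) by (apply cond_pos_sum; auto).
  assert (HC : 0 <= C) by (apply cond_pos_sum; intros; specialize (Hw n0); nra).
  assert (Hq : 0 <= A * x (S n) * x (S n) - 2 * B * x (S n) + C).
  { destruct (Rle_lt_dec A 0).
    - assert (A = 0) by lra. assert (HB : B * B <= 0) by (rewrite H in IHn; lra). assert (B = 0) by (destruct (Rtotal_order B 0) as [h|[h|h]]; nra). rewrite H, H0. lra.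
    - set (y := x (S n)).
      assert (E : A * (A * y * y - 2 * B * y + C) = (A*y - B)*(A*y-B) + (A*C - B*(B*1))) by ring.
      assert (0 <= (A*y - B)*(A*y-B)) by (pose proof (Rle_0_sqr (A*y-B)); unfold Rsqr in *; lra).
      assert (0 <= A * (A * y * y - 2 * B * y + C)) by lra.
      apply Rmult_le_reg_l with A; [lra|]. rewrite Rmult_0_r. lra. }
  specialize (Hw (S n)). simpl in IHn. nra.
Qed.

Lemma win_count a b n :
  sum_f_R0 (fun j => if andb (a <=? j)%nat (j <=? b)%nat then 1 else 0) n = INR (S (Nat.min n b) - a).
Proof.
  induction n as [|n IHn].
  - simpl. destruct a; simpl; auto.
  - rewrite tech5, IHn.
    destruct (Nat.leb_spec a (S n)), (Nat.leb_spec (S n) b); cbn [andb].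
    + replace (S (Nat.min (S n) b) - a)%nat with ((S (Nat.min n b) - a) + 1)%nat by lia.
      rewrite plus_INR; replace (INR 1) with 1 by reflexivity; ring.
    + replace (S (Nat.min (S n) b) - a)%nat with (S (Nat.min n b) - a)%nat by lia. ring.
    + replace (S (Nat.min (S n) b) - a)%nat with (S (Nat.min n b) - a)%nat by lia. ring.
    + replace (S (Nat.min (S n) b) - a)%nat with (S (Nat.min n b) - a)%nat by lia. ring.
Qed.

Lemma row_bound (g : nat -> R) c N M n : (forall j, 0 <= g j <= M) ->
  (forall j, (j + N < c \/ c + N < j)%nat -> g j = 0) -> sum_f_R0 g n <= INR (2 * N + 1) * M.
Proof.
  intros Hg Hz. assert (HM : 0 <= M) by (destruct (Hg 0%nat); lra).
  apply Rle_trans with (sum_f_R0 (fun j => (if andb ((c - N) <=? j)%nat (j <=? c + N)%nat then 1 else 0) * M) n).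
  - apply sum_Rle. intros j _. destruct (Nat.leb_spec (c - N) j), (Nat.leb_spec j (c + N)); simpl;
      try (destruct (Hg j); lra); rewrite Hz by lia; lra.
  - rewrite <- scal_sum, win_count. rewrite Rmult_comm. apply Rmult_le_compat_r; auto.
    apply le_INR. lia.
Qed.

Lemma sum_exchange (a : nat -> nat -> R) m n :
  sum_f_R0 (fun i => sum_f_R0 (fun j => a i j) n) m = sum_f_R0 (fun j => sum_f_R0 (fun i => a i j) m) n.
Proof.
  induction m; simpl. apply sum_eq; auto.
  rewrite IHm, <- plus_sum. apply sum_eq; auto.
Qed.

Lemma sum_scal_l c f n : sum_f_R0 (fun i => c * f i) n = c * sum_f_R0 f n.
Proof. rewrite scal_sum. apply sum_eq; intros; ring. Qed.

Lemma normle_mono T e e' : normle T e -> e <= e' -> normle T e'.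
Proof.
  intros [He H] Hle. split. lra. intros n v. eapply Rle_trans. apply H.
  apply Rmult_le_compat_r. apply cond_pos_sum; intros; unfold Cnorm2; nra.
  apply Rmult_le_compat; lra.
Qed.

Lemma band_norm N M T : bandz N T -> ebound M T -> normle T (INR (2 * N + 1) * M).
Proof.
  intros Hb He. assert (HM : 0 <= M) by (eapply Rle_trans; [apply Cabs_ge0| apply (He 0%nat 0%nat)]).
  set (K := INR (2 * N + 1) * M).
  assert (HK : 0 <= K) by (unfold K; apply Rmult_le_pos; auto; apply pos_INR).
  split; auto. intros n v.
  set (a := fun i j => Cabs (T i j)). set (w := fun j => Cnorm2 (v j)).
  assert (Ha : forall i j, 0 <= a i j <= M) by (intros; split; [apply Cabs_ge0| apply He]).
  assert (Haz : forall i j, (j + N < i \/ i + N < j)%nat -> a i j = 0)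
    by (intros; unfold a; rewrite Hb by auto; apply Cabs_C0).
  assert (Hw : forall j, 0 <= w j) by (intros; unfold w, Cnorm2; nra).
  assert (Hrow : forall i, sum_f_R0 (fun j => a i j) n <= K).
  { intros i. apply (row_bound _ i N); auto. }
  assert (Hcol : forall j, sum_f_R0 (fun i => a i j) n <= K).
  { intros j. apply (row_bound _ j N); auto. intros i Hi. apply Haz; lia. }
  apply Rle_trans with (sum_f_R0 (fun i => K * sum_f_R0 (fun j => a i j * w j) n) n).
  - apply sum_Rle. intros i _.
    assert (H1 : Cabs (Cfsum (fun j => Cmult (T i j) (v j)) n) <=
                 sum_f_R0 (fun j => a i j * Cabs (v j)) n).
    { eapply Rle_trans. apply Cfsum_abs. apply sum_Rle; intros. rewrite Cabs_mult. apply Rle_refl. }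
    assert (H2 := wcs (fun j => a i j) (fun j => Cabs (v j)) n (fun j => proj1 (Ha i j))).
    simpl in H2.
    assert (H3 : sum_f_R0 (fun j => a i j * Cabs (v j) * Cabs (v j)) n = sum_f_R0 (fun j => a i j * w j) n).
    { apply sum_eq; intros. unfold w. rewrite Cnorm2_Cabs. ring. }
    rewrite H3 in H2.
    assert (H4 : 0 <= sum_f_R0 (fun j => a i j * w j) n).
    { apply cond_pos_sum; intros; specialize (Ha i n0); specialize (Hw n0); nra. }
    rewrite Cnorm2_Cabs.
    assert (H5 := Cabs_ge0 (Cfsum (fun j => Cmult (T i j) (v j)) n)).
    assert (H6 := Hrow i). nra.
  - rewrite sum_scal_l. rewrite sum_exchange.
    apply Rle_trans with (K * sum_f_R0 (fun j => w j * K) n).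
    + apply Rmult_le_compat_l; auto. apply sum_Rle. intros j _.
      rewrite (sum_eq _ (fun i => w j * a i j)) by (intros; ring).
      rewrite sum_scal_l.
      apply Rmult_le_compat_l; auto.
    + rewrite <- scal_sum. right. unfold w. ring.
Qed.

Fixpoint beta (alpha : nat -> Cplx) (k : nat) : Cplx :=
  match k with O => C0 | S k' => Cplus (beta alpha k') (alpha k') end.
Definition dmap (alpha : nat -> Cplx) (T : Mat) : Mat :=
  fun i j => Cmult (Cminus (beta alpha i) (beta alpha j)) (T i j).

Lemma lip (g : nat -> Cplx) e : (forall k, Cabs (Cminus (g (S k)) (g k)) <= e) ->
  forall i k, Cabs (Cminus (g i) (g k)) <= INR ((i - k) + (k - i)) * e.
Proof.
  intros H.
  assert (He : 0 <= e) by (eapply Rle_trans; [apply Cabs_ge0|apply (H 0%nat)]).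
  assert (Hm : forall k m, Cabs (Cminus (g (k + m)%nat) (g k)) <= INR m * e).
  { intros k m; induction m.
    - rewrite Nat.add_0_r. replace (Cminus (g k) (g k)) with C0 by cring. rewrite Cabs_C0; simpl; lra.
    - replace (Cminus (g (k + S m)%nat) (g k)) with
        (Cplus (Cminus (g (S (k + m))) (g (k + m)%nat)) (Cminus (g (k + m)%nat) (g k)))
        by (replace (k + S m)%nat with (S (k + m)) by lia; cring).
      eapply Rle_trans. apply Cabs_tri. rewrite S_INR. specialize (H (k + m)%nat). lra. }
  intros i k. destruct (Nat.le_ge_cases k i).
  - replace i with (k + (i - k))%nat at 1 by lia.
    replace ((i - k) + (k - i))%nat with (i - k)%nat by lia. apply Hm.
  - rewrite Cabs_minus_sym. replace k with (i + (k - i))%nat at 1 by lia.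
    replace ((i - k) + (k - i))%nat with (k - i)%nat by lia. apply Hm.
Qed.

Lemma bandz_mono N N' T : bandz N T -> (N <= N')%nat -> bandz N' T.
Proof. intros H Hle i j Hij. apply H. lia. Qed.

Lemma band_mmul N1 N2 S T : bandz N1 S -> bandz N2 T -> bandz (N1 + N2) (mmul S T).
Proof.
  intros HS HT i k Hik. rewrite (mmul_fin S T N1) by auto. apply Cfsum_zero. intros j Hj.
  destruct (Nat.lt_ge_cases (j + N1) i). rewrite HS by lia; apply Cmult_0_l.
  destruct (Nat.lt_ge_cases (i + N1) j). rewrite HS by lia; apply Cmult_0_l.
  rewrite HT by lia. apply Cmult_0_r.
Qed.

Lemma ebound_mmul N1 M1 M2 S T : bandz N1 S -> ebound M1 S -> ebound M2 T ->
  ebound (INR (2 * N1 + 1) * (M1 * M2)) (mmul S T).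
Proof.
  intros HS H1 H2 i k. rewrite (mmul_fin S T N1) by auto.
  eapply Rle_trans. apply Cfsum_abs. apply (row_bound _ i N1).
  - intros j. rewrite Cabs_mult. split. apply Rmult_le_pos; apply Cabs_ge0.
    apply Rmult_le_compat; try apply Cabs_ge0; auto.
  - intros j Hj. rewrite HS by lia. rewrite Cmult_0_l, Cabs_C0. auto.
Qed.

Lemma madj_mmul N S T : bandz N S -> madj (mmul S T) = mmul (madj T) (madj S).
Proof.
  intros HS. apply functional_extensionality; intro i; apply functional_extensionality; intro k.
  unfold madj at 1. rewrite (mmul_fin S T N) by auto. unfold mmul.
  rewrite (Cseries_finite _ (k + N)).
  - rewrite <- Cfsum_conj. apply Cfsum_ext. intros j _. unfold madj. cring.
  - intros j Hj. unfold madj. rewrite (HS k j) by lia. cring.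
Qed.

Lemma dmap_leibniz alpha N S T : bandz N S ->
  dmap alpha (mmul S T) = madd (mmul (dmap alpha S) T) (mmul S (dmap alpha T)).
Proof.
  intros HS. apply functional_extensionality; intro i; apply functional_extensionality; intro k.
  unfold madd at 1. unfold dmap at 1.
  assert (HdS : bandz N (dmap alpha S)).
  { intros a b Hab. unfold dmap. rewrite HS by auto. apply Cmult_0_r. }
  rewrite (mmul_fin S T N), (mmul_fin _ T N), (mmul_fin S _ N) by auto.
  rewrite <- Cfsum_scal, <- Cfsum_plus. apply Cfsum_ext. intros j _. unfold dmap. cring.
Qed.

Lemma band_diag g : bandz 0 (diag g).
Proof. intros i j H. unfold diag. destruct (Nat.eqb_spec i j). lia. auto. Qed.
Lemma ebound_diag g M : 0 <= M -> (forall k, Cabs (g k) <= M) -> ebound M (diag g).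
Proof. intros HM H i j. unfold diag. destruct (Nat.eqb i j). auto. rewrite Cabs_C0; auto. Qed.
Lemma band_U : bandz 1 Ushift.
Proof. intros i j H. unfold Ushift. destruct (Nat.eqb_spec i (S j)). lia. auto. Qed.
Lemma ebound_U : ebound 1 Ushift.
Proof. intros i j. unfold Ushift. destruct (Nat.eqb i (S j)). rewrite Cabs_C1; lra. rewrite Cabs_C0; lra. Qed.
Lemma band_adj N T : bandz N T -> bandz N (madj T).
Proof. intros H i j Hij. unfold madj. rewrite H by lia. cring. Qed.
Lemma ebound_adj M T : ebound M T -> ebound M (madj T).
Proof. intros H i j. unfold madj. rewrite Cabs_conj. auto. Qed.
Lemma ebound_ge0 M T : ebound M T -> 0 <= M.
Proof. intros H. eapply Rle_trans. apply Cabs_ge0. apply (H 0%nat 0%nat). Qed.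

Lemma Acal_be {G : TopAbGroup} (x1 : G) T : Acal x1 T -> exists N M, bandz N T /\ ebound M T.
Proof.
  unfold Acal. induction 1 as [T HT|S T _ [N1 [M1 [B1 E1]]] _ [N2 [M2 [B2 E2]]]
     |c T _ [N1 [M1 [B1 E1]]]|S T _ [N1 [M1 [B1 E1]]] _ [N2 [M2 [B2 E2]]]|T _ [N1 [M1 [B1 E1]]]].
  - destruct HT as [->|[->|[chi [[_ [Hchi _]] ->]]]].
    + exists 1%nat, 1. split. apply band_U. apply ebound_U.
    + exists 1%nat, 1. split. apply band_adj, band_U. apply ebound_adj, ebound_U.
    + exists 0%nat, 1. split. apply band_diag. apply ebound_diag. lra. intros k; rewrite Hchi; lra.
  - exists (Nat.max N1 N2), (M1 + M2). split.
    + intros i j H. unfold madd. rewrite B1, B2 by lia. cring.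
    + intros i j. unfold madd. eapply Rle_trans. apply Cabs_tri. specialize (E1 i j); specialize (E2 i j); lra.
  - exists N1, (Cabs c * M1). split.
    + intros i j H. unfold mscal. rewrite B1 by lia. cring.
    + intros i j. unfold mscal. rewrite Cabs_mult. apply Rmult_le_compat_l. apply Cabs_ge0. auto.
  - exists (N1 + N2)%nat, (INR (2 * N1 + 1) * (M1 * M2)). split.
    apply band_mmul; auto. apply ebound_mmul; auto.
  - exists N1, M1. split. apply band_adj; auto. apply ebound_adj; auto.
Qed.

Lemma madj_madj T : madj (madj T) = T.
Proof. apply functional_extensionality; intro i; apply functional_extensionality; intro k. unfold madj. cring. Qed.

Lemma character_conj {G : TopAbGroup} (chi : G -> Cplx) : character chi -> character (fun x => Cconj (chi x)).
Proof.
  intros [Hc [Ha Hm]]. split; [|split].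
  - intros x eps He. destruct (Hc x eps He) as [U [HU [HUx HUy]]]. exists U; split; auto; split; auto.
    intros y Hy. replace (Cminus (Cconj (chi y)) (Cconj (chi x))) with (Cconj (Cminus (chi y) (chi x))) by cring.
    rewrite Cabs_conj; auto.
  - intros x. rewrite Cabs_conj; auto.
  - intros x y. rewrite Hm. cring.
Qed.

Definition GenA {G : TopAbGroup} (x1 : G) : Mat -> Prop :=
  fun T => T = Ushift \/ T = madj Ushift \/ exists chi : G -> Cplx, character chi /\ T = Mf x1 chi.

Inductive pos {G : TopAbGroup} (x1 : G) : Mat -> Prop :=
  | p_gen : forall T, GenA x1 T -> pos x1 T
  | p_add : forall S T, pos x1 S -> pos x1 T -> pos x1 (madd S T)
  | p_scal : forall c T, pos x1 T -> pos x1 (mscal c T)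
  | p_mul : forall S T, pos x1 S -> pos x1 T -> pos x1 (mmul S T).

Lemma pos_Acal {G : TopAbGroup} (x1 : G) T : pos x1 T -> Acal x1 T.
Proof.
  induction 1. apply sa_gen; auto. apply sa_add; auto. apply sa_scal; auto. apply sa_mul; auto.
Qed.

Lemma Acal_pos {G : TopAbGroup} (x1 : G) T : Acal x1 T -> pos x1 T /\ pos x1 (madj T).
Proof.
  intros HA. pose proof HA as HA'. unfold Acal in HA'. induction HA'.
  - split. apply p_gen; auto.
    destruct H as [->|[->|[chi [Hchi ->]]]].
    + apply p_gen. right; left; auto.
    + rewrite madj_madj. apply p_gen. left; auto.
    + apply p_gen. right; right. exists (fun x => Cconj (chi x)). split. apply character_conj; auto.
      unfold Mf, madj, diag. apply functional_extensionality; intro i; apply functional_extensionality; intro k.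
      destruct (Nat.eqb_spec k i), (Nat.eqb_spec i k); subst; try lia; auto; cring.
  - destruct (IHHA'1 HA'1) as [P1 Q1]. destruct (IHHA'2 HA'2) as [P2 Q2]. split. apply p_add; auto.
    replace (madj (madd S T)) with (madd (madj S) (madj T)). apply p_add; auto.
    apply functional_extensionality; intro i; apply functional_extensionality; intro k. unfold madj, madd. cring.
  - destruct (IHHA' HA') as [P1 Q1]. split. apply p_scal; auto.
    replace (madj (mscal c T)) with (mscal (Cconj c) (madj T)). apply p_scal; auto.
    apply functional_extensionality; intro i; apply functional_extensionality; intro k. unfold madj, mscal. cring.
  - destruct (IHHA'1 HA'1) as [P1 Q1]. destruct (IHHA'2 HA'2) as [P2 Q2]. split. apply p_mul; auto.
    destruct (Acal_be x1 S HA'1) as [N [M [B _]]].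
    rewrite (madj_mmul N) by auto. apply p_mul; auto.
  - destruct (IHHA' HA') as [P1 Q1]. rewrite madj_madj. split; auto.
Qed.

Lemma derivs_agree {G : TopAbGroup} (x1 : G) alpha d1 d2 :
  is_derivation (Acal x1) (Abig x1) d1 -> dalpha_conds x1 alpha d1 ->
  is_derivation (Acal x1) (Abig x1) d2 -> dalpha_conds x1 alpha d2 ->
  forall T, pos x1 T -> d1 T = d2 T.
Proof.
  intros [_ [A1 [S1 M1]]] [U1 [V1 Z1]] [_ [A2 [S2 M2]]] [U2 [V2 Z2]].
  induction 1.
  - destruct H as [->|[->|[chi [Hchi ->]]]].
    + rewrite U1, U2; auto.
    + rewrite V1, V2; auto.
    + assert (A0 x1 (Mf x1 chi)).
      { exists (fun _ => C0), chi. split. exists 0%nat; auto. split. apply cs_char; auto.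
        apply functional_extensionality; intro i; apply functional_extensionality; intro k.
        unfold madd, diag. destruct (Nat.eqb i k); cring. }
      rewrite Z1, Z2; auto.
  - rewrite A1, A2 by (apply pos_Acal; auto). rewrite IHpos1, IHpos2; auto.
  - rewrite S1, S2 by (apply pos_Acal; auto). rewrite IHpos; auto.
  - rewrite M1, M2 by (apply pos_Acal; auto). rewrite IHpos1, IHpos2; auto.
Qed.

Definition GenB {G : TopAbGroup} (x1 : G) : Mat -> Prop :=
  fun T => T = Ushift \/ exists f : G -> Cplx, continuous f /\ T = Mf x1 f.

Lemma term_le_sum (f : nat -> R) k n : (forall j, 0 <= f j) -> (k <= n)%nat -> f k <= sum_f_R0 f n.
Proof.
  intros H. induction n; intros Hk; simpl.
  - replace k with 0%nat by lia. lra.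
  - destruct (Nat.eq_dec k (S n)). subst. pose proof (cond_pos_sum f n H). lra.
    pose proof (IHn ltac:(lia)). specialize (H (S n)). lra.
Qed.

Lemma c0_bounded alpha : c0seq alpha -> exists A, 0 <= A /\ forall k, Cabs (alpha k) <= A.
Proof.
  intros H. destruct (H 1 ltac:(lra)) as [N HN].
  exists (1 + sum_f_R0 (fun l => Cabs (alpha l)) N).
  assert (Hs : 0 <= sum_f_R0 (fun l => Cabs (alpha l)) N) by (apply cond_pos_sum; intros; apply Cabs_ge0).
  split. lra. intros k. destruct (Nat.le_gt_cases N k).
  - specialize (HN k H0). lra.
  - pose proof (term_le_sum (fun l => Cabs (alpha l)) k N (fun j => Cabs_ge0 _) ltac:(lia)). simpl in H1. lra.
Qed.

Lemma beta_inc alpha k : Cminus (beta alpha (S k)) (beta alpha k) = alpha k.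
Proof. simpl. cring. Qed.

Lemma beta_dist alpha A : (forall k, Cabs (alpha k) <= A) ->
  forall i k, Cabs (Cminus (beta alpha i) (beta alpha k)) <= INR ((i - k) + (k - i)) * A.
Proof. intros H. apply lip. intros k. rewrite beta_inc. auto. Qed.

Lemma beta_abs alpha A : (forall k, Cabs (alpha k) <= A) -> forall m, Cabs (beta alpha m) <= INR m * A.
Proof.
  intros H m. pose proof (beta_dist alpha A H m 0). replace (Cminus (beta alpha m) (beta alpha 0)) with (beta alpha m) in H0 by (simpl; cring).
  replace ((m - 0) + (0 - m))%nat with m in H0 by lia. auto.
Qed.

Lemma normle_msub_sym P Q e : normle (msub P Q) e -> normle (msub Q P) e.
Proof.
  intros [He H]. split; auto. intros n v. eapply Rle_trans; [|apply (H n v)]. right.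
  apply sum_eq. intros i _.
  replace (Cfsum (fun j => Cmult (msub Q P i j) (v j)) n) with (Copp (Cfsum (fun j => Cmult (msub P Q i j) (v j)) n)).
  unfold Cnorm2, Copp; simpl; ring.
  rewrite <- Cfsum_opp. apply Cfsum_ext. intros; unfold msub, madd, mopp. cring.
Qed.

Lemma Acal_in_B {G : TopAbGroup} (x1 : G) T : Acal x1 T -> star_alg (GenB x1) T.
Proof.
  unfold Acal. induction 1.
  - destruct H as [->|[->|[chi [[Hc _] ->]]]].
    + apply sa_gen. left; auto.
    + apply sa_adj, sa_gen. left; auto.
    + apply sa_gen. right. exists chi; auto.
  - apply sa_add; auto.
  - apply sa_scal; auto.
  - apply sa_mul; auto.
  - apply sa_adj; auto.
Qed.

Lemma mopp_scal T : mopp T = mscal (Copp Defs.C1) T.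
Proof. apply functional_extensionality; intro i; apply functional_extensionality; intro k. unfold mopp, mscal. cring. Qed.

Lemma mcomm_in {G : TopAbGroup} (x1 : G) X a : star_alg (GenB x1) X -> star_alg (GenB x1) a ->
  star_alg (GenB x1) (mcomm X a).
Proof.
  intros HX Ha. unfold mcomm, msub. apply sa_add. apply sa_mul; auto. rewrite mopp_scal. apply sa_scal, sa_mul; auto.
Qed.

Definition Qd (m : nat) : Mat := diag (fun k => if (m <=? k)%nat then Defs.C1 else C0).
Definition Xd (alpha : nat -> Cplx) (j : nat) : Mat := diag (fun k => beta alpha (Nat.min k j)).

Lemma Qd_in {G : TopAbGroup} (x1 : G) m : star_alg (GenB x1) (Qd m).
Proof.
  induction m.
  - apply sa_gen. right. exists (fun _ => Defs.C1). split.
    + intros x eps He. exists (fun _ => True). split. apply open_full. split; auto.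
      intros y _. replace (Cminus Defs.C1 Defs.C1) with C0 by cring. rewrite Cabs_C0; auto.
    + reflexivity.
  - replace (Qd (S m)) with (mmul Ushift (mmul (Qd m) (madj Ushift))).
    apply sa_mul. apply sa_gen; left; auto. apply sa_mul; auto. apply sa_adj, sa_gen; left; auto.
    unfold Qd. rewrite UQU. f_equal. apply functional_extensionality; intro k. destruct k; reflexivity.
Qed.

Lemma Xd_in {G : TopAbGroup} (x1 : G) alpha j : star_alg (GenB x1) (Xd alpha j).
Proof.
  induction j.
  - replace (Xd alpha 0) with (mscal C0 (Qd 0)). apply sa_scal, Qd_in.
    apply functional_extensionality; intro i; apply functional_extensionality; intro k.
    unfold Xd, Qd, mscal, diag. rewrite Nat.min_0_r. destruct (Nat.eqb i k); simpl; cring.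
  - replace (Xd alpha (S j)) with (madd (Xd alpha j) (mscal (alpha j) (Qd (S j)))).
    apply sa_add; auto. apply sa_scal, Qd_in.
    apply functional_extensionality; intro i; apply functional_extensionality; intro k.
    unfold Xd, Qd, mscal, madd, diag. destruct (Nat.eqb_spec i k).
    + subst. destruct (Nat.leb_spec (S j) k).
      * rewrite Nat.min_r, Nat.min_r by lia. simpl. cring.
      * rewrite !Nat.min_l by lia. cring.
    + cring.
Qed.

Lemma zero_normle T eps : 0 < eps -> (forall i j, T i j = C0) -> normle T eps.
Proof.
  intros He H. apply normle_mono with (INR (2 * 0 + 1) * 0). apply band_norm.
  intros i j _; auto. intros i j; rewrite H, Cabs_C0; lra. lra.
Qed.

Lemma Xd_big {G : TopAbGroup} (x1 : G) alpha j : c0seq alpha -> Abig x1 (Xd alpha j).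
Proof.
  intros Hc. destruct (c0_bounded alpha Hc) as [A [HA HAb]]. split.
  - exists (INR (2 * 0 + 1) * (INR j * A)). apply band_norm. apply band_diag.
    apply ebound_diag. apply Rmult_le_pos; auto; apply pos_INR.
    intros k. eapply Rle_trans. apply (beta_abs alpha A HAb). apply Rmult_le_compat_r; auto. apply le_INR; lia.
  - intros eps He. exists (Xd alpha j). split. apply Xd_in. apply zero_normle; auto.
    intros; unfold msub, madd, mopp; cring.
Qed.

Lemma approx alpha N M a : c0seq alpha -> bandz N a -> ebound M a ->
  forall eps, 0 < eps -> exists J, forall j, (J <= j)%nat ->
    normle (msub (mcomm (Xd alpha j) a) (dmap alpha a)) eps.
Proof.
  intros Hc Hb He eps Heps.
  assert (HM : 0 <= M) by (eapply ebound_ge0; eauto).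
  set (K := INR (2 * N + 1) * INR N * M + 1).
  assert (HK : 0 < K) by (unfold K; pose proof (pos_INR (2*N+1)); pose proof (pos_INR N);
    assert (0 <= INR (2 * N + 1) * INR N) by (apply Rmult_le_pos; auto);
    assert (0 <= INR (2 * N + 1) * INR N * M) by (apply Rmult_le_pos; auto); lra).
  set (ep := eps / K). assert (Hep : 0 < ep) by (unfold ep; apply Rdiv_lt_0_compat; auto).
  destruct (Hc ep Hep) as [J HJ]. exists J. intros j Hj.
  set (r := fun l => Cminus (beta alpha (Nat.min l j)) (beta alpha l)).
  assert (Hr : forall l, Cabs (Cminus (r (S l)) (r l)) <= ep).
  { intros l. unfold r. destruct (Nat.lt_ge_cases l j).
    - rewrite !Nat.min_l by lia. replace (Cminus (Cminus (beta alpha (S l)) (beta alpha (S l))) (Cminus (beta alpha l) (beta alpha l))) with C0 by cring.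
      rewrite Cabs_C0; lra.
    - rewrite !Nat.min_r by lia. simpl beta.
      replace (Cminus (Cminus (beta alpha j) (Cplus (beta alpha l) (alpha l))) (Cminus (beta alpha j) (beta alpha l))) with (Copp (alpha l)) by cring.
      rewrite Cabs_opp. left. apply HJ. lia. }
  assert (Hent : msub (mcomm (Xd alpha j) a) (dmap alpha a) = fun i k => Cmult (Cminus (r i) (r k)) (a i k)).
  { unfold mcomm, Xd. rewrite mmul_diag_l, mmul_diag_r.
    apply functional_extensionality; intro i; apply functional_extensionality; intro k.
    unfold msub, madd, mopp, dmap, r. cring. }
  rewrite Hent. apply normle_mono with (INR (2 * N + 1) * (INR N * ep * M)).
  - apply band_norm.
    + intros i k H. rewrite Hb by auto. apply Cmult_0_r.
    + intros i k. rewrite Cabs_mult. destruct (Nat.lt_ge_cases (k + N) i).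
      { rewrite Hb by lia. rewrite Cabs_C0, Rmult_0_r. apply Rmult_le_pos; [apply Rmult_le_pos; [apply pos_INR|lra]|auto]. }
      destruct (Nat.lt_ge_cases (i + N) k).
      { rewrite Hb by lia. rewrite Cabs_C0, Rmult_0_r. apply Rmult_le_pos; [apply Rmult_le_pos; [apply pos_INR|lra]|auto]. }
      apply Rmult_le_compat; try apply Cabs_ge0; auto.
      eapply Rle_trans. apply (lip r ep Hr). apply Rmult_le_compat_r. lra. apply le_INR. lia.
  - replace (INR (2 * N + 1) * (INR N * ep * M)) with ((INR (2 * N + 1) * INR N * M) * ep) by ring.
    unfold ep. apply Rle_trans with (K * (eps / K)).
    apply Rmult_le_compat_r. unfold Rdiv; apply Rmult_le_pos; [lra| left; apply Rinv_0_lt_compat; auto]. unfold K; lra.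
    right. field. lra.
Qed.

Lemma dmap_big {G : TopAbGroup} (x1 : G) alpha a : c0seq alpha -> Acal x1 a -> Abig x1 (dmap alpha a).
Proof.
  intros Hc Ha. destruct (Acal_be x1 a Ha) as [N [M [Hb He]]].
  destruct (c0_bounded alpha Hc) as [A [HA HAb]].
  assert (HM : 0 <= M) by (eapply ebound_ge0; eauto).
  split.
  - exists (INR (2 * N + 1) * (INR N * A * M)). apply band_norm.
    + intros i k H. unfold dmap. rewrite Hb by auto. apply Cmult_0_r.
    + intros i k. unfold dmap. rewrite Cabs_mult. destruct (Nat.lt_ge_cases (k + N) i).
      { rewrite Hb by lia. rewrite Cabs_C0, Rmult_0_r. apply Rmult_le_pos; [apply Rmult_le_pos; [apply pos_INR|lra]|auto]. }
      destruct (Nat.lt_ge_cases (i + N) k).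
      { rewrite Hb by lia. rewrite Cabs_C0, Rmult_0_r. apply Rmult_le_pos; [apply Rmult_le_pos; [apply pos_INR|lra]|auto]. }
      apply Rmult_le_compat; try apply Cabs_ge0; auto.
      eapply Rle_trans. apply (beta_dist alpha A HAb). apply Rmult_le_compat_r. lra. apply le_INR. lia.
  - intros eps He0. destruct (approx alpha N M a Hc Hb He eps He0) as [J HJ].
    exists (mcomm (Xd alpha J) a). split.
    + apply mcomm_in. apply Xd_in. apply Acal_in_B; auto.
    + apply normle_msub_sym. apply HJ. lia.
Qed.

Lemma Cexpi_inv t : Cmult (Cexpi (- t)) (Cexpi t) = Defs.C1.
Proof.
  unfold Cexpi, Cmult, Defs.C1. rewrite cos_neg, sin_neg. simpl.
  pose proof (sin2_cos2 t). unfold Rsqr in H. apply injective_projections; simpl; nra.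
Qed.

Lemma invariant_dmap alpha dom : invariant dom (dmap alpha).
Proof.
  intros theta a _. unfold rho. rewrite !mmul_diag_l, !mmul_diag_r.
  apply functional_extensionality; intro i; apply functional_extensionality; intro k.
  unfold dmap.
  replace (- theta * INR i) with (- (theta * INR i)) by ring.
  replace (- (- theta * INR k)) with (theta * INR k) by ring.
  pose proof (Cexpi_inv (theta * INR i)) as H1. pose proof (Cexpi_inv (theta * INR k)) as H2.
  set (p := Cexpi (theta * INR i)) in *. set (p' := Cexpi (- (theta * INR i))) in *.
  set (q := Cexpi (theta * INR k)) in *. set (q' := Cexpi (- (theta * INR k))) in *.
  set (z := Cmult (Cminus (beta alpha i) (beta alpha k)) (a i k)).
  transitivity (Cmult (Cmult p' p) (Cmult (Cmult q' q) z)).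
  - unfold z. cring.
  - rewrite H1, H2. unfold z. cring.
Qed.

Theorem lemma3p1 :
  forall (G : TopAbGroup) (x1 : G),
    compact_group G -> hausdorff G -> infinite_group G -> dense_cyclic x1 ->
    forall alpha : nat -> Cplx, c0seq alpha ->
      exists d : Mat -> Mat,
        (is_derivation (Acal x1) (Abig x1) d /\ dalpha_conds x1 alpha d /\
         approx_inner (Acal x1) (Abig x1) d /\ invariant (Acal x1) d) /\
        (forall d' : Mat -> Mat,
            is_derivation (Acal x1) (Abig x1) d' -> dalpha_conds x1 alpha d' ->
            forall a, Acal x1 a -> d' a = d a).
Proof.
  intros G x1 _ _ _ _ alpha Hc.
  assert (Hder : is_derivation (Acal x1) (Abig x1) (dmap alpha)).
  { split; [|split; [|split]].
    - intros a Ha. apply dmap_big; auto.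
    - intros a b _ _. apply functional_extensionality; intro i; apply functional_extensionality; intro k.
      unfold dmap, madd. cring.
    - intros c a _. apply functional_extensionality; intro i; apply functional_extensionality; intro k.
      unfold dmap, mscal. cring.
    - intros a b Ha _. destruct (Acal_be x1 a Ha) as [N [M [Hb _]]]. apply (dmap_leibniz alpha N); auto. }
  assert (Hcond : dalpha_conds x1 alpha (dmap alpha)).
  { split; [|split].
    - rewrite mmul_diag_r. apply functional_extensionality; intro i; apply functional_extensionality; intro k.
      unfold dmap, Ushift. destruct (Nat.eqb_spec i (S k)).
      + subst. simpl beta. cring.
      + cring.
    - rewrite mmul_diag_l. apply functional_extensionality; intro i; apply functional_extensionality; intro k.
      unfold dmap, mopp, madj, Ushift. destruct (Nat.eqb_spec k (S i)).
      + subst. simpl beta. cring.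
      + cring.
    - intros a [s [f [_ [_ ->]]]]. apply functional_extensionality; intro i; apply functional_extensionality; intro k.
      unfold dmap, madd, Mf, diag, mzero. destruct (Nat.eqb_spec i k).
      + subst. cring.
      + cring. }
  exists (dmap alpha). split; [split; [|split; [|split]]|]; auto.
  - exists (Xd alpha). split.
    + intros j. apply Xd_big; auto.
    + intros a Ha eps He. destruct (Acal_be x1 a Ha) as [N [M [Hb Hm]]].
      apply (approx alpha N M a Hc Hb Hm eps He).
  - apply invariant_dmap.
  - intros d' Hd' Hc' a Ha. apply (derivs_agree x1 alpha); auto. apply Acal_pos; auto.
Qed.
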